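(* Let $\mathbb K$ be an odometer-based system and $\nu$ a shift-invariant Borel probability measure on $\mathbb K$. Then $\nu(S)=1$.
   Context: An odometer-based construction sequence over a finite alphabet $\Sigma$ with coefficients $k_n\ge 2$: $\mathcal W_0=\Sigma$, $\mathcal W_{n+1}\subseteq(\mathcal W_n)^{k_n}$ (concatenations of $k_n$ words of $\mathcal W_n$), each $\mathcal W_n$ uniquely readable (whenever $u,v,w\in\mathcal W_n$ and $uv=pws$ then $p$ or $s$ is empty), and each word of $\mathcal W_n$ occurs in each word of $\mathcal W_{n+1}$. $\mathbb K$ is the set of $x\in\Sigma^{\mathbb Z}$ all of whose finite subwords occur in a word of some $\mathcal W_n$, with the shift $sh(x)(i)=x(i+1)$. $S\subseteq\mathbb K$ is the set of $x$ for which there are sequences $a_m,b_m\to\infty$ of natural numbers such that for every $m$ there is an $n$ with $x\restriction[-a_m,b_m)\in\mathcal W_n$. *)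

(* Defs.v *)
From Stdlib Require Import Reals ZArith List.
Import ListNotations.
Open Scope R_scope.

Section Defs.
Variable Sigma : Type.

Definition point := Z -> Sigma.

Definition sh (x : point) : point := fun i => x (i + 1)%Z.

Definition window (x : point) (i : Z) (len : nat) : list Sigma :=
  map (fun t => x (i + Z.of_nat t)%Z) (seq 0 len).

Definition occurs (u w : list Sigma) : Prop :=
  exists p s, w = p ++ u ++ s.

Definition odometer_construction (k : nat -> nat) (W : nat -> list Sigma -> Prop) : Prop :=
  (exists l : list Sigma, forall a, In a l) /\
  (forall n, (2 <= k n)%nat) /\
  (forall w, W 0%nat w <-> exists a, w = [a]) /\
  (forall n w, W (S n) w ->
      exists ws : list (list Sigma),
        length ws = k n /\ Forall (W n) ws /\ w = concat ws) /\
  (forall n u v w p s, W n u -> W n v -> W n w ->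
      u ++ v = p ++ w ++ s -> p = [] \/ s = []) /\                   (* unique readability *)
  (forall n u v, W n u -> W (S n) v -> occurs u v).

Definition Kset (W : nat -> list Sigma -> Prop) (x : point) : Prop :=
  forall (i : Z) (len : nat), exists n w, W n w /\ occurs (window x i len) w.

Definition tends_to_infinity (a : nat -> nat) : Prop :=
  forall N, exists M, forall m, (M <= m)%nat -> (N <= a m)%nat.

Definition Sset (W : nat -> list Sigma -> Prop) (x : point) : Prop :=
  Kset W x /\
  exists a b : nat -> nat,
    tends_to_infinity a /\ tends_to_infinity b /\
    forall m, exists n, W n (window x (- Z.of_nat (a m))%Z (a m + b m)).

Definition cylinder (i : Z) (u : list Sigma) (x : point) : Prop :=
  window x i (length u) = u.

(* Borel sigma-algebra of Sigma^Z (product of discrete finite Sigma):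
   the sigma-algebra generated by the cylinder sets (a countable base). *)
Inductive borel : (point -> Prop) -> Prop :=
| borel_cyl : forall i u, borel (cylinder i u)
| borel_compl : forall A, borel A -> borel (fun x => ~ A x)
| borel_union : forall A : nat -> point -> Prop,
    (forall n, borel (A n)) -> borel (fun x => exists n, A n x).

Definition borel_probability (nu : (point -> Prop) -> R) : Prop :=
  (forall A, borel A -> 0 <= nu A) /\
  nu (fun _ => True) = 1 /\
  (forall A : nat -> point -> Prop,
     (forall n, borel (A n)) ->
     (forall n m x, n <> m -> A n x -> A m x -> False) ->
     infinite_sum (fun n => nu (A n)) (nu (fun x => exists n, A n x))).

Definition shift_invariant (nu : (point -> Prop) -> R) : Prop :=
  forall A, borel A -> nu (fun x => A (sh x)) = nu A.

End Defs.

Arguments sh {Sigma}.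
Arguments window {Sigma}.
Arguments occurs {Sigma}.
Arguments odometer_construction {Sigma}.
Arguments Kset {Sigma}.
Arguments Sset {Sigma}.
Arguments cylinder {Sigma}.
Arguments borel {Sigma}.
Arguments borel_probability {Sigma}.
Arguments shift_invariant {Sigma}.

(* Main.v *)
Require Import Defs.
From Stdlib Require Import Reals ZArith List Lia Lra Classical ClassicalEpsilon FunctionalExtensionality PropExtensionality.
Import ListNotations.
Open Scope R_scope.

Lemma pred_ext {T} (A B : T -> Prop) : (forall x, A x <-> B x) -> A = B.
Proof. intro H; apply functional_extensionality; intro x; apply propositional_extensionality; auto. Qed.

Lemma borel_ext {Sg} (A B : (Z -> Sg) -> Prop) : (forall x, A x <-> B x) -> borel A -> borel B.
Proof. intros H; rewrite (pred_ext A B H); auto. Qed.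

Lemma window_nil {Sg} (x : Z -> Sg) i : window x i 0 = [].
Proof. reflexivity. Qed.

Lemma borel_True {Sg} : borel (fun _ : Z -> Sg => True).
Proof. apply borel_ext with (cylinder 0%Z []). intro x; unfold cylinder; simpl; tauto. constructor. Qed.

Lemma borel_False {Sg} : borel (fun _ : Z -> Sg => False).
Proof. apply borel_ext with (fun x => ~ True). tauto. constructor; apply borel_True. Qed.

Lemma borel_not {Sg} (A : (Z -> Sg) -> Prop) : borel A -> borel (fun x => ~ A x).
Proof. constructor; auto. Qed.

Lemma borel_exists {Sg} (A : nat -> (Z -> Sg) -> Prop) : (forall n, borel (A n)) -> borel (fun x => exists n, A n x).
Proof. constructor; auto. Qed.

Lemma borel_forall {Sg} (A : nat -> (Z -> Sg) -> Prop) : (forall n, borel (A n)) -> borel (fun x => forall n, A n x).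
Proof. intro H. apply borel_ext with (fun x => ~ exists n, ~ A n x).
  intro x; split. intros H1 n; apply NNPP; intro; apply H1; eauto. intros H1 [n Hn]; auto.
  constructor; constructor; intro n; constructor; auto. Qed.

Lemma borel_or {Sg} (A B : (Z -> Sg) -> Prop) : borel A -> borel B -> borel (fun x => A x \/ B x).
Proof. intros HA HB. apply borel_ext with (fun x => exists n, match n with O => A x | _ => B x end).
  intro x; split. intros [[|n] H]; auto. intros [H|H]. exists O; auto. exists 1%nat; auto.
  constructor; intros [|n]; auto. Qed.

Lemma borel_and {Sg} (A B : (Z -> Sg) -> Prop) : borel A -> borel B -> borel (fun x => A x /\ B x).
Proof. intros HA HB. apply borel_ext with (fun x => ~ (~ A x \/ ~ B x)).
  intro x; tauto. constructor; apply borel_or; constructor; auto. Qed.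

Lemma borel_prop {Sg} (P : Prop) (A : (Z -> Sg) -> Prop) : borel A -> borel (fun x => P /\ A x).
Proof. intro HA. destruct (classic P).
  apply borel_ext with A; auto. intro; tauto.
  apply borel_ext with (fun _ => False). intro; tauto. apply borel_False. Qed.

Lemma borel_forallZ {Sg} (A : Z -> (Z -> Sg) -> Prop) : (forall i, borel (A i)) -> borel (fun x => forall i, A i x).
Proof. intro H. apply borel_ext with (fun x => forall n:nat, A (Z.of_nat n) x /\ A (- Z.of_nat n)%Z x).
  intro x; split. intros H1 i. destruct (Z_le_gt_dec 0 i).
  replace i with (Z.of_nat (Z.to_nat i)) by lia. apply H1.
  replace i with (- Z.of_nat (Z.to_nat (-i)))%Z by lia. apply H1.
  intros H1 n; auto.
  apply borel_forall; intro; apply borel_and; auto. Qed.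

Fixpoint words {Sg} (l : list Sg) (L : nat) : list (list Sg) :=
  match L with O => [[]] | S L => flat_map (fun a => map (cons a) (words l L)) l end.

Lemma words_in {Sg} (l : list Sg) (Hl : forall a, In a l) L (u : list Sg) : length u = L -> In u (words l L).
Proof. revert u; induction L; intros [|a u] Hu; simpl in *; try lia; auto.
  apply in_flat_map. exists a; split; auto. apply in_map. apply IHL; lia. Qed.

Lemma window_length {Sg} (x : Z -> Sg) i L : length (window x i L) = L.
Proof. unfold window; rewrite length_map, length_seq; auto. Qed.

Lemma borel_window {Sg} (l : list Sg) (Hl : forall a, In a l) i L (P : list Sg -> Prop) :
  borel (fun x : Z -> Sg => P (window x i L)).
Proof.
  set (ws := words l L).
  apply borel_ext with (fun x => exists t, (t < length ws /\ P (nth t ws []) /\ length (nth t ws []) = L)%nat /\ cylinder i (nth t ws []) x).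
  - intro x; split.
    + intros [t [[H1 [H2 H3]] H4]]. unfold cylinder in H4. rewrite H3 in H4. rewrite H4; auto.
    + intro HP. assert (Hin : In (window x i L) ws) by (apply words_in; auto; apply window_length).
      destruct (In_nth _ _ [] Hin) as [t [Ht Ht2]]. exists t. rewrite Ht2. repeat split; auto.
      apply window_length. unfold cylinder; rewrite window_length; auto.
  - constructor; intro t; apply borel_prop; constructor.
Qed.
Fixpoint fsum (f : nat -> R) (M : nat) : R := match M with O => 0 | S M => fsum f M + f M end.

Lemma sum_fsum f n : sum_f_R0 f n = fsum f (S n).
Proof. induction n; simpl in *. lra. rewrite IHn; simpl; lra. Qed.

Lemma fsum_stable f M : (forall t, (M <= t)%nat -> f t = 0) -> forall n, (M <= n)%nat -> fsum f n = fsum f M.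
Proof. intros H n Hn. induction Hn; auto. simpl. rewrite IHHn, H; auto. lra. Qed.

Lemma fsum_le f g M : (forall t, (t < M)%nat -> f t <= g t) -> fsum f M <= fsum g M.
Proof. induction M; simpl; intros; try lra. assert (f M <= g M) by auto. assert (fsum f M <= fsum g M) by auto. lra. Qed.

Lemma fsum_ext f g M : (forall t, (t < M)%nat -> f t = g t) -> fsum f M = fsum g M.
Proof. induction M; simpl; intros; auto. rewrite IHM, H; auto. Qed.

Lemma fsum_const c M : fsum (fun _ => c) M = INR M * c.
Proof. induction M; simpl fsum. simpl; lra. rewrite IHM, S_INR; lra. Qed.

Lemma infsum_fin f M : (forall t, (M <= t)%nat -> f t = 0) -> infinite_sum f (fsum f M).
Proof. intros H eps He. exists M; intros n Hn. rewrite sum_fsum, (fsum_stable f M H); [|lia].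
  unfold Rdist. replace (fsum f M - fsum f M) with 0 by lra. rewrite Rabs_R0; lra. Qed.

Lemma nu_ext {Sg} (nu : ((Z -> Sg) -> Prop) -> R) (A B : (Z -> Sg) -> Prop) : (forall x, A x <-> B x) -> nu A = nu B.
Proof. intro H; rewrite (pred_ext A B H); auto. Qed.

Lemma sum_const_n c n : sum_f_R0 (fun _ => c) n = INR (S n) * c.
Proof. rewrite sum_fsum, fsum_const; auto. Qed.

Lemma nu_empty {Sg} (nu : ((Z -> Sg) -> Prop) -> R) : borel_probability nu -> nu (fun _ => False) = 0.
Proof. intros [H0 [H1 H2]].
  assert (Hs := H2 (fun _ _ => False) (fun _ => borel_False) (fun n m x _ h _ => h)).
  cbv beta in Hs. unfold point in Hs.
  replace (nu (fun _ => exists _ : nat, False)) with (nu (fun _ => False)) in Hs by (apply nu_ext; intro; split; [tauto|intros [_ []]]).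
  set (c := nu (fun _ => False)) in *.
  destruct (Req_dec c 0) as [|Hc]; auto. exfalso.
  destruct (Hs (Rabs c) (Rabs_pos_lt _ Hc)) as [N HN].
  specialize (HN (S N) ltac:(lia)). unfold Rdist in HN. rewrite sum_const_n in HN.
  replace (INR (S (S N)) * c - c) with (INR (S N) * c) in HN by (rewrite (S_INR (S N)); lra).
  rewrite Rabs_mult, Rabs_pos_eq in HN by apply pos_INR.
  assert (1 <= INR (S N)) by (apply (le_INR 1); lia).
  assert (0 <= Rabs c) by apply Rabs_pos. nra.
Qed.

Lemma nu_fin {Sg} (nu : ((Z -> Sg) -> Prop) -> R) : borel_probability nu ->
  forall (G : nat -> (Z -> Sg) -> Prop) M, (forall t, borel (G t)) ->
  (forall t t' x, (t < M)%nat -> (t' < M)%nat -> t <> t' -> G t x -> G t' x -> False) ->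
  nu (fun x => exists t, (t < M)%nat /\ G t x) = fsum (fun t => nu (G t)) M.
Proof. intros Hnu G M HG Hd. pose proof Hnu as [H0 [H1 H2]].
  assert (Hs := H2 (fun t x => (t < M)%nat /\ G t x) (fun t => borel_prop _ _ (HG t))
     ltac:(intros n m x Hnm [? ?] [? ?]; eauto)).
  cbv beta in Hs. eapply uniqueness_sum; [exact Hs|].
  replace (fsum (fun t => nu (G t)) M) with (fsum (fun t => nu (fun x => (t < M)%nat /\ G t x)) M).
  apply infsum_fin. intros t Ht. rewrite <- (nu_empty nu Hnu). apply nu_ext; intro; split; [lia|tauto].
  apply fsum_ext. intros t Ht. apply nu_ext; intro; split; [tauto|split; auto].
Qed.

Lemma nu_add2 {Sg} (nu : ((Z -> Sg) -> Prop) -> R) : borel_probability nu ->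
  forall A B, borel A -> borel B -> (forall x, A x -> B x -> False) ->
  nu (fun x => A x \/ B x) = nu A + nu B.
Proof. intros Hnu A B HA HB Hd.
  pose (G := fun t x => (t = O /\ A x) \/ (t = 1%nat /\ B x)).
  assert (E := nu_fin nu Hnu G 2 ltac:(intro t; apply borel_or; apply borel_prop; auto)
     ltac:(intros t t' x Ht Ht' Hne [[-> ?]|[-> ?]] [[-> ?]|[-> ?]]; eauto)).
  simpl in E. rewrite Rplus_0_l in E.
  rewrite (nu_ext nu (G O) A), (nu_ext nu (G 1%nat) B) in E by (unfold G; intro; split; [intros [[? ?]|[? ?]]; auto; lia|auto]).
  rewrite <- E. apply nu_ext. intro x; unfold G; split.
  intros [H|H]; [exists O|exists 1%nat]; auto.
  intros [t [Ht [[? ?]|[? ?]]]]; auto.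
Qed.

Lemma nu_mono {Sg} (nu : ((Z -> Sg) -> Prop) -> R) : borel_probability nu ->
  forall A B, borel A -> borel B -> (forall x, A x -> B x) -> nu A <= nu B.
Proof. intros Hnu A B HA HB Hs. pose proof Hnu as [H0 _].
  rewrite (nu_ext nu B (fun x => A x \/ (B x /\ ~ A x))) by (intro x; split; [tauto|intros [?|[? ?]]; auto]).
  rewrite nu_add2; auto. assert (0 <= nu (fun x => B x /\ ~ A x)) by (apply H0; apply borel_and; auto; constructor; auto). lra.
  apply borel_and; auto; constructor; auto. intros x ? [? ?]; auto.
Qed.

Lemma nu_le1 {Sg} (nu : ((Z -> Sg) -> Prop) -> R) : borel_probability nu ->
  forall A, borel A -> nu A <= 1.
Proof. intros Hnu A HA. pose proof Hnu as [_ [H1 _]]. rewrite <- H1. apply nu_mono; auto. apply borel_True. Qed.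

Lemma nu_null_union {Sg} (nu : ((Z -> Sg) -> Prop) -> R) : borel_probability nu ->
  forall A : nat -> (Z -> Sg) -> Prop, (forall n, borel (A n)) -> (forall n, nu (A n) = 0) ->
  (forall n x, A n x -> A (S n) x) -> nu (fun x => exists n, A n x) = 0.
Proof. intros Hnu A HA Hz Hm. pose proof Hnu as [H0 [H1 H2]].
  pose (D := fun n x => A n x /\ match n with O => True | S m => ~ A m x end).
  assert (HD : forall n, borel (D n)).
  { intros [|n]; apply borel_and; auto. apply borel_True. constructor; auto. }
  assert (Hmono : forall n m x, (n <= m)%nat -> A n x -> A m x).
  { intros n m x Hnm; induction Hnm; auto. }
  assert (Hs := H2 D HD ltac:(intros n m x Hnm [Hn Hn'] [Hm' Hm'']; destruct (Nat.lt_gt_cases n m) as [[Hl|Hl] _]; auto;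
      [destruct m; [lia|apply Hm''; apply (Hmono n); auto; lia]|destruct n; [lia|apply Hn'; apply (Hmono m); auto; lia]])).
  rewrite (nu_ext nu (fun x => exists n, A n x) (fun x => exists n, D n x)).
  eapply uniqueness_sum; [exact Hs|]. replace 0 with (fsum (fun n => nu (D n)) 0) by reflexivity.
  apply infsum_fin. intros t _. apply Rle_antisym; [|apply H0; auto].
  rewrite <- (Hz t). apply nu_mono; auto. intros x [? ?]; auto.
  intro x; split.
  - intros [n Hn]. induction n. exists O; split; simpl; auto.
    destruct (classic (A n x)); auto. exists (S n); split; auto.
  - intros [n [? ?]]; eauto.
Qed.

Fixpoint hh (k : nat -> nat) (n : nat) : nat := match n with O => 1%nat | S n => (k n * hh k n)%nat end.

Lemma concat_len {Sg} (ws : list (list Sg)) h : Forall (fun v => length v = h) ws -> length (concat ws) = (length ws * h)%nat.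
Proof. induction 1; simpl; auto. rewrite length_app; lia. Qed.

Lemma app_len_inv {Sg} (l1 l2 l3 l4 : list Sg) : l1 ++ l2 = l3 ++ l4 -> length l1 = length l3 -> l1 = l3 /\ l2 = l4.
Proof. revert l3; induction l1; intros [|b l3] E L; simpl in *; try lia; auto.
  inversion E; subst. destruct (IHl1 l3) as [-> ->]; auto. Qed.

Lemma map_seq_shift {A} (f : nat -> A) n : forall s, map f (seq s n) = map (fun t => f (s + t)%nat) (seq 0 n).
Proof. induction n; intro s; simpl; auto. rewrite Nat.add_0_r. f_equal. rewrite IHn.
  rewrite <- seq_shift, map_map. apply map_ext; intro; f_equal; lia. Qed.

Lemma window_app {Sg} (x : Z -> Sg) i a b : window x i (a + b) = window x i a ++ window x (i + Z.of_nat a) b.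
Proof. unfold window. rewrite seq_app, map_app. f_equal. simpl.
  rewrite map_seq_shift. apply map_ext; intro t; f_equal; lia. Qed.

Lemma window_shift {Sg} (x : Z -> Sg) i L : window (sh x) i L = window x (i + 1) L.
Proof. unfold window, sh. apply map_ext; intro; f_equal; lia. Qed.

Lemma window_ext {Sg} (x : Z -> Sg) i i' L : i = i' -> window x i L = window x i' L.
Proof. intros ->; auto. Qed.

Section Comb.
Context {Sg : Type} (k : nat -> nat) (W : nat -> list Sg -> Prop) (HW : odometer_construction k W).

Lemma Wlen n w : W n w -> length w = hh k n.
Proof. destruct HW as (Hfin & Hk & H0 & Hs & Hur & Hocc).
  revert w; induction n; intros w Hw; simpl.
  - apply H0 in Hw as [a ->]; auto.
  - destruct (Hs n w Hw) as (ws & Hl & Hf & ->). rewrite (concat_len ws (hh k n)); [lia|].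
    eapply Forall_impl; [|exact Hf]; auto.
Qed.

Lemma hh_pos n : (1 <= hh k n)%nat.
Proof. destruct HW as (Hfin & Hk & _). induction n; simpl; auto. specialize (Hk n); nia. Qed.

Lemma hh_grow n : (n < hh k n)%nat.
Proof. destruct HW as (Hfin & Hk & _). induction n; simpl; auto. specialize (Hk n); nia. Qed.

Lemma hh_mono m n : (m <= n)%nat -> (hh k m <= hh k n)%nat.
Proof. destruct HW as (Hfin & Hk & _). induction 1; auto. simpl. specialize (Hk m0); nia. Qed.

Lemma Wparse d : forall n w, W (n + d) w -> exists ws, Forall (W n) ws /\ w = concat ws.
Proof. destruct HW as (Hfin & Hk & H0 & Hs & Hur & Hocc).
  induction d; intros n w Hw.
  - rewrite Nat.add_0_r in Hw. exists [w]; simpl; rewrite app_nil_r; auto.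
  - rewrite Nat.add_succ_r in Hw. destruct (Hs _ w Hw) as (vs & _ & Hf & ->). clear Hw.
    induction Hf as [|v vs Hv Hf IH].
    + exists []; auto.
    + destruct IH as (ws2 & Hf2 & E2). destruct (IHd n v Hv) as (ws1 & Hf1 & E1).
      exists (ws1 ++ ws2). split. apply Forall_app; auto. simpl; rewrite concat_app; congruence.
Qed.

Lemma align n ws : Forall (W n) ws -> forall P u Q, concat ws = P ++ u ++ Q -> W n u ->
  exists q, length P = (q * hh k n)%nat.
Proof. pose proof HW as (Hfin & Hk & H0 & Hs & Hur & Hocc).
  assert (Hp := hh_pos n).
  induction 1 as [|v ws' Hv Hf IH]; intros P u Q E Hu; pose proof (Wlen _ _ Hu) as Lu.
  - simpl in E. apply (f_equal (@length _)) in E. rewrite !length_app in E. simpl in E. lia.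
  - pose proof (Wlen _ _ Hv) as Lv. simpl in E.
    destruct (app_eq_app _ _ _ _ E) as [l [[E1 E2]|[E1 E2]]].
    + destruct P as [|p0 P']. { exists O; auto. }
      destruct l as [|l0 l']. { exists 1%nat. rewrite app_nil_r in E1. subst. simpl in *. lia. }
      set (P := p0 :: P') in *. set (l := l0 :: l') in *.
      assert (LP : length v = (length P + length l)%nat) by (rewrite E1, length_app; auto).
      assert (1 <= length P)%nat by (simpl; lia). assert (1 <= length l)%nat by (simpl; lia).
      destruct (app_eq_app _ _ _ _ E2) as [l2 [[F1 F2]|[F1 F2]]].
      2:{ apply (f_equal (@length _)) in F1. rewrite length_app in F1. lia. }
      assert (L2 : length u = (length l + length l2)%nat) by (rewrite F1, length_app; auto).
      destruct Hf as [|v' ws'' Hv' Hf'].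
      { simpl in F2. destruct l2; simpl in *; try lia. discriminate. }
      pose proof (Wlen _ _ Hv') as Lv'. simpl in F2.
      destruct (app_eq_app _ _ _ _ F2) as [l3 [[G1 G2]|[G1 G2]]].
      2:{ apply (f_equal (@length _)) in G1. rewrite length_app in G1. lia. }
      destruct (Hur n v v' u P l3 Hv Hv' Hu) as [Hn|Hn].
      * rewrite E1, G1, F1. rewrite !app_assoc. auto.
      * subst P; discriminate.
      * subst l3. rewrite app_nil_r in G1. subst v'. lia.
    + destruct (IH l u Q E2 Hu) as [q Hq]. exists (S q). rewrite E1, length_app; simpl. lia.
Qed.

Lemma block h (ws : list (list Sg)) : Forall (fun v => length v = h) ws -> forall pos, (pos < length (concat ws))%nat ->
  exists ws1 v ws2, ws = ws1 ++ v :: ws2 /\ (length (concat ws1) <= pos < length (concat ws1) + h)%nat.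
Proof. induction 1 as [|v ws' Hv Hf IH]; intros pos Hpos; simpl in *. lia.
  rewrite length_app in Hpos.
  destruct (Nat.lt_ge_cases pos h).
  - exists [], v, ws'. simpl; split; auto; lia.
  - destruct (IH (pos - h)%nat ltac:(lia)) as (ws1 & v' & ws2 & -> & H2).
    exists (v :: ws1), v', ws2. simpl. rewrite length_app. split; auto; lia.
Qed.

Lemma Kparse x n i L : Kset W x -> (hh k n < L)%nat ->
  exists ws p s, Forall (W n) ws /\ concat ws = p ++ window x i L ++ s.
Proof. intros HK HL. destruct (HK i L) as (m & w & Hw & p & s & E).
  destruct (Nat.le_gt_cases m n).
  - exfalso. pose proof (Wlen _ _ Hw). pose proof (hh_mono _ _ H).
    apply (f_equal (@length _)) in E. rewrite !length_app, window_length in E. lia.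
  - replace m with (n + (m - n))%nat in Hw by lia. destruct (Wparse _ _ _ Hw) as (ws & Hf & ->).
    exists ws, p, s; auto.
Qed.

Lemma parse x n : Kset W x -> exists j, (j < hh k n)%nat /\ W n (window x (- Z.of_nat j) (hh k n)).
Proof. intro HK. set (h := hh k n). assert (Hp : (1 <= h)%nat) by apply hh_pos.
  destruct (Kparse x n (- Z.of_nat h) (2 * h) HK ltac:(unfold h; lia)) as (ws & p & s & Hf & E).
  assert (Hf' : Forall (fun v => length v = h) ws) by (eapply Forall_impl; [|exact Hf]; intros; apply Wlen; auto).
  destruct (block h ws Hf' (length p + h)) as (ws1 & v & ws2 & -> & Hb).
  { rewrite E, !length_app, window_length; lia. }
  set (c := length (concat ws1)) in *.
  set (o := (c - length p)%nat).
  assert (Ho : (1 <= o <= h)%nat) by (unfold o; lia).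
  exists (h - o)%nat. split. lia.
  replace (2 * h)%nat with (o + (h + (h - o)))%nat in E by lia.
  rewrite !window_app, concat_app in E. simpl in E.
  assert (E' : concat ws1 ++ (v ++ concat ws2) = (p ++ window x (- Z.of_nat h) o) ++
     (window x (- Z.of_nat h + Z.of_nat o) h ++ (window x (- Z.of_nat h + Z.of_nat o + Z.of_nat h) (h - o) ++ s)))
    by (rewrite E; now rewrite !app_assoc). clear E. rename E' into E.
  apply app_len_inv in E as [_ E].
  2:{ rewrite length_app, window_length. unfold o, c in *; lia. }
  apply app_len_inv in E as [E _].
  2:{ rewrite window_length. apply Forall_app in Hf as [_ Hf]. inversion Hf; subst. apply Wlen; auto. }
  apply Forall_app in Hf as [_ Hf]. inversion Hf; subst.
  erewrite window_ext; [eassumption|]. lia.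
Qed.

Lemma disj x n i i' : Kset W x -> (i < i' < i + Z.of_nat (hh k n))%Z ->
  W n (window x i (hh k n)) -> W n (window x i' (hh k n)) -> False.
Proof. intros HK Hi H1 H2. set (h := hh k n) in *. assert (Hp : (1 <= h)%nat) by apply hh_pos.
  destruct (Kparse x n i (2 * h) HK ltac:(unfold h; lia)) as (ws & p & s & Hf & E).
  set (d := Z.to_nat (i' - i)).
  assert (Hd : (1 <= d < h)%nat) by (unfold d; lia).
  assert (E1 := E). replace (2 * h)%nat with (h + h)%nat in E1 by lia.
  rewrite window_app, <- app_assoc in E1.
  destruct (align n ws Hf p _ _ E1 H1) as [q Hq].
  replace (2 * h)%nat with (d + (h + (h - d)))%nat in E by lia.
  rewrite !window_app in E. rewrite (window_ext x (i + Z.of_nat d) i') in E by (unfold d; lia).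
  assert (E' : concat ws = (p ++ window x i d) ++ window x i' h ++ (window x (i + Z.of_nat d + Z.of_nat h) (h - d) ++ s))
    by (rewrite E; now rewrite !app_assoc). clear E; rename E' into E.
  destruct (align n ws Hf _ _ _ E H2) as [q' Hq']. rewrite length_app, window_length in Hq'.
  fold h in Hq, Hq'. destruct (Nat.le_gt_cases q' q) as [Hc|Hc].
  - pose proof (Nat.mul_le_mono_r q' q h Hc). lia.
  - pose proof (Nat.mul_le_mono_r (S q) q' h Hc). simpl in *. lia.
Qed.
End Comb.

Lemma Kset_sh {Sg} (W : nat -> list Sg -> Prop) x : Kset W (sh x) <-> Kset W x.
Proof. unfold Kset. split; intros H i len.
  - rewrite (window_ext x i (i - 1 + 1)) by lia. rewrite <- window_shift. apply H.
  - rewrite window_shift. apply H. Qed.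

Definition Sgood {Sg} (W : nat -> list Sg -> Prop) (x : Z -> Sg) : Prop :=
  forall N, exists a b, (N <= a /\ N <= b)%nat /\ exists n, W n (window x (- Z.of_nat a) (a + b)).

Lemma Schar {Sg} (W : nat -> list Sg -> Prop) x : Sset W x <-> Kset W x /\ Sgood W x.
Proof. split.
  - intros [HK (a & b & Ha & Hb & H)]. split; auto. intro N.
    destruct (Ha N) as [M1 H1]. destruct (Hb N) as [M2 H2].
    exists (a (max M1 M2)), (b (max M1 M2)). split. split; [apply H1|apply H2]; lia. apply H.
  - intros [HK HG]. split; auto.
    pose (f := fun N => proj1_sig (ClassicalEpsilon.constructive_indefinite_description _ (HG N))).
    assert (Hf : forall N, exists b, (N <= f N /\ N <= b)%nat /\ exists n, W n (window x (- Z.of_nat (f N)) (f N + b))).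
    { intro N. unfold f. destruct (ClassicalEpsilon.constructive_indefinite_description _ (HG N)); auto. }
    pose (g := fun N => proj1_sig (ClassicalEpsilon.constructive_indefinite_description _ (Hf N))).
    assert (Hg : forall N, (N <= f N /\ N <= g N)%nat /\ exists n, W n (window x (- Z.of_nat (f N)) (f N + g N))).
    { intro N. unfold g. destruct (ClassicalEpsilon.constructive_indefinite_description _ (Hf N)); auto. }
    exists f, g. split; [|split].
    + intro N; exists N; intros m Hm. destruct (Hg m) as [[? ?] _]; lia.
    + intro N; exists N; intros m Hm. destruct (Hg m) as [[? ?] _]; lia.
    + intro m. apply (Hg m).
Qed.

Definition Bad {Sg} (W : nat -> list Sg -> Prop) (N : nat) (x : Z -> Sg) : Prop :=
  Kset W x /\ forall a b n, (N <= a)%nat -> (N <= b)%nat -> ~ W n (window x (- Z.of_nat a) (a + b)).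

Definition Fb {Sg} (k : nat -> nat) (W : nat -> list Sg -> Prop) n j (x : Z -> Sg) : Prop :=
  Kset W x /\ W n (window x (- Z.of_nat j) (hh k n)).

Section Main.
Context {Sg : Type} (k : nat -> nat) (W : nat -> list Sg -> Prop) (HW : odometer_construction k W)
  (nu : ((Z -> Sg) -> Prop) -> R) (Hnu : borel_probability nu) (Hinv : shift_invariant nu).

Let l := proj1_sig (ClassicalEpsilon.constructive_indefinite_description _ (proj1 HW)).
Let Hl : forall a, In a l.
Proof. unfold l. destruct (ClassicalEpsilon.constructive_indefinite_description _ (proj1 HW)); auto. Qed.

Lemma borel_K : borel (Kset W).
Proof. unfold Kset. apply borel_forallZ; intro i. apply borel_forall; intro len.
  apply (borel_window l Hl i len (fun u => exists n w, W n w /\ occurs u w)). Qed.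

Lemma borel_good : borel (Sgood W).
Proof. unfold Sgood. apply borel_forall; intro N. apply borel_exists; intro a. apply borel_exists; intro b.
  apply borel_prop. apply (borel_window l Hl _ _ (fun u => exists n, W n u)). Qed.

Lemma borel_S : borel (Sset W).
Proof. apply borel_ext with (fun x => Kset W x /\ Sgood W x). intro; rewrite Schar; tauto.
  apply borel_and; [apply borel_K|apply borel_good]. Qed.

Lemma borel_Bad N : borel (Bad W N).
Proof. apply borel_ext with (fun x => Kset W x /\ ~ exists a, exists b, ((N <= a)%nat /\ (N <= b)%nat) /\
    (exists n, W n (window x (- Z.of_nat a) (a + b)))).
  - intro x; unfold Bad; split.
    + intros [HK H]; split; auto. intros a b n ? ? Hn. apply H. exists a, b. split; eauto.
    + intros [HK H]; split; auto. intros [a [b [[Ha Hb] [n0 Hn]]]]. eapply H; [exact Ha|exact Hb|exact Hn].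
  - apply borel_and; [apply borel_K|]. constructor. apply borel_exists; intro a. apply borel_exists; intro b.
    apply borel_prop. apply (borel_window l Hl _ _ (fun u => exists n, W n u)). Qed.

Lemma borel_F n j : borel (Fb k W n j).
Proof. apply borel_and; [apply borel_K|]. apply (borel_window l Hl _ _ (fun u => W n u)). Qed.

Lemma F_const n j : nu (Fb k W n j) = nu (Fb k W n 0).
Proof. induction j; auto. rewrite <- IHj. rewrite <- (Hinv _ (borel_F n (S j))).
  apply nu_ext. intro x. unfold Fb. rewrite Kset_sh, window_shift.
  rewrite (window_ext x _ (- Z.of_nat j)) by lia. tauto. Qed.

Lemma F_disj n j j' x : (j < hh k n)%nat -> (j' < hh k n)%nat -> j <> j' -> Fb k W n j x -> Fb k W n j' x -> False.
Proof. intros Hj Hj' Hne [HK H1] [_ H2].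
  destruct (Nat.lt_gt_cases j j') as [[Hc|Hc] _]; auto.
  - eapply (disj k W HW x n (- Z.of_nat j') (- Z.of_nat j)); eauto. lia.
  - eapply (disj k W HW x n (- Z.of_nat j) (- Z.of_nat j')); eauto. lia.
Qed.

Lemma F_bound n : INR (hh k n) * nu (Fb k W n 0) <= 1.
Proof.
  rewrite <- (fsum_const _ (hh k n)).
  rewrite (fsum_ext _ (fun t => nu (Fb k W n t))) by (intros; symmetry; apply F_const).
  rewrite <- (nu_fin nu Hnu (Fb k W n) (hh k n) (borel_F n)) by (intros t t' x ? ? ? ? ?; apply (F_disj n t t' x); auto).
  apply nu_le1; auto. apply borel_exists; intro; apply borel_prop; apply borel_F.
Qed.

Lemma Bad_bound N n : (2 * N <= hh k n)%nat -> nu (Bad W N) <= INR (2 * N) * nu (Fb k W n 0).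
Proof. intro HN. set (h := hh k n) in *.
  pose (g := fun t => if Nat.ltb t N then t else (h - 2 * N + t)%nat).
  assert (Hg : forall t, (t < 2 * N)%nat -> (g t < h)%nat /\ (t < N -> g t = t)%nat /\ (N <= t -> g t = h - 2 * N + t)%nat).
  { intros t Ht; unfold g. destruct (Nat.ltb_spec t N); split; lia. }
  rewrite <- (fsum_const _ (2 * N)).
  rewrite (fsum_ext _ (fun t => nu (Fb k W n (g t)))) by (intros; symmetry; apply F_const).
  rewrite <- (nu_fin nu Hnu (fun t => Fb k W n (g t)) (2 * N) (fun t => borel_F n (g t))).
  - apply nu_mono; auto. apply borel_Bad. apply borel_exists; intro; apply borel_prop; apply borel_F.
    intros x [HK HB]. destruct (parse k W HW x n HK) as (j & Hj & Hw). fold h in Hj, Hw.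
    destruct (Nat.lt_ge_cases j N).
    + exists j. destruct (Hg j ltac:(lia)) as (_ & E & _). rewrite E by lia. split. lia. split; auto.
    + destruct (Nat.lt_ge_cases (h - j) N).
      * exists (j + 2 * N - h)%nat. destruct (Hg (j + 2 * N - h)%nat ltac:(lia)) as (_ & _ & E).
        rewrite E by lia. split. lia. split; auto. erewrite window_ext; [eassumption|]. lia.
      * exfalso. apply (HB j (h - j)%nat n); auto. replace (j + (h - j))%nat with h by lia. auto.
  - intros t t' x Ht Ht' Hne. destruct (Hg t Ht) as (A1 & B1 & C1). destruct (Hg t' Ht') as (A2 & B2 & C2).
    apply F_disj; auto. destruct (Nat.lt_ge_cases t N); destruct (Nat.lt_ge_cases t' N); lia.
Qed.

Lemma Bad_null N : nu (Bad W N) = 0.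
Proof. pose proof Hnu as [H0 _].
  assert (Hp : 0 <= nu (Bad W N)) by (apply H0; apply borel_Bad).
  destruct (Req_dec (nu (Bad W N)) 0) as [|Hne]; auto. exfalso.
  set (e := nu (Bad W N)) in *. assert (He : e > 0) by lra.
  destruct (INR_archimed e (INR (2 * N)) He) as [n0 Hn0].
  set (n := max n0 (2 * N)). pose proof (hh_grow k W HW n). set (h := hh k n) in *.
  assert (Hb := Bad_bound N n ltac:(unfold h, n in *; lia)). fold e h in Hb.
  assert (Hc := F_bound n). fold h in Hc.
  assert (INR n0 <= INR h) by (apply le_INR; unfold n in *; lia).
  assert (0 <= nu (Fb k W n 0)) by (apply H0; apply borel_F).
  assert (0 <= INR (2 * N)) by apply pos_INR.
  assert (0 <= INR h) by apply pos_INR.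
  assert (e * INR h <= INR (2 * N) * nu (Fb k W n 0) * INR h) by (apply Rmult_le_compat_r; auto).
  assert (INR (2 * N) * (INR h * nu (Fb k W n 0)) <= INR (2 * N) * 1) by (apply Rmult_le_compat_l; auto).
  assert (e * INR n0 <= e * INR h) by (apply Rmult_le_compat_l; lra).
  nra.
Qed.

Lemma S_full : nu (Kset W) = 1 -> nu (Sset W) = 1.
Proof. intro HK. pose proof Hnu as [H0 _].
  assert (Hu : nu (fun x => exists N, Bad W N x) = 0).
  { apply nu_null_union; auto. apply borel_Bad. apply Bad_null.
    intros N x [HK' H]; split; auto. intros a b m ? ?. apply H; lia. }
  assert (HKS : borel (fun x => Kset W x /\ ~ Sset W x)) by (apply borel_and; [apply borel_K|constructor; apply borel_S]).
  assert (Hz : nu (fun x => Kset W x /\ ~ Sset W x) = 0).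
  { apply Rle_antisym; [|apply H0; auto]. rewrite <- Hu. apply nu_mono; auto.
    apply borel_exists; apply borel_Bad.
    intros x [HKx HS]. apply NNPP; intro Hn. apply HS. apply Schar. split; auto.
    intro N. apply NNPP; intro HN. apply Hn. exists N. split; auto.
    intros a b m Ha Hb Hw. apply HN. exists a, b. split; eauto. }
  rewrite <- HK, (nu_ext nu (Kset W) (fun x => Sset W x \/ (Kset W x /\ ~ Sset W x))).
  rewrite nu_add2; auto. lra. apply borel_S. intros x ? [? ?]; auto.
  intro x; split. intro; destruct (classic (Sset W x)); auto. intros [H|[H _]]; auto. apply Schar in H; tauto.
Qed.
End Main.

Theorem mainTheorem14
  (Sigma : Type) (k : nat -> nat) (W : nat -> list Sigma -> Prop)
  (HW : odometer_construction k W)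
  (nu : ((Z -> Sigma) -> Prop) -> R)
  (Hnu : borel_probability nu)
  (HK : nu (Kset W) = 1)
  (Hinv : shift_invariant nu) :
  borel (Sset W) /\ nu (Sset W) = 1.
Proof. split. apply (borel_S k W HW). apply (S_full k W HW nu Hnu Hinv HK). Qed.
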